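(* Let $\mathcal{CP}$ be a $d$-dimensional cube packing with $N$ cubes, and write $N=4q+r$ with integers $q\geq 0$, $0\le r\le 3$. Then $$m_1(\mathcal{CP})=\left(\frac{3^d}{4^d}\right)N\quad\text{and}\quad m_1(\mathcal{CP})+N(N-1)2^{-d}+2^{-d}\,d\,\{2q(q-1)+rq\}\le m_2(\mathcal{CP}).$$
   Context: A $d$-dimensional cube packing is a $4\mathbb{Z}^d$-invariant set of pairwise disjoint translates $y+[0,2[^d$ with $y\in\mathbb{Z}^d$; its number of cubes $N$ is the number of $4\mathbb{Z}^d$-orbits of its cubes. For $z\in\mathbb{Z}^d$, $N_z(\mathcal{CP})$ is the number of cubes of $\mathcal{CP}$ contained in $z+[0,4[^d$. For a $4\mathbb{Z}^d$-periodic function $g$ on $\mathbb{Z}^d$, its average is $E(g)=4^{-d}\sum_{z\in\{0,1,2,3\}^d}g(z)$, and the $i$-th moment of $\mathcal{CP}$ is $m_i(\mathcal{CP})=E(N_z(\mathcal{CP})^i)$. *)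

(* Defs.v *)
From HB Require Import structures.
From mathcomp Require Import all_boot all_order all_algebra.
From mathcomp Require Import boolp classical_sets reals Rstruct.
From Stdlib Require Rdefinitions.

Set Implicit Arguments.
Unset Strict Implicit.
Unset Printing Implicit Defensive.

Import Order.TTheory GRing.Theory Num.Theory.
Local Open Scope ring_scope.
Local Open Scope classical_set_scope.

Definition zvec (d : nat) := 'I_d -> int.
Definition rvec (d : nat) := 'I_d -> Rdefinitions.R.

Definition cube (d : nat) (y : zvec d) : set (rvec d) :=
  [set x | forall i, ((y i)%:~R <= x i) && (x i < (y i)%:~R + 2)].

Definition box4 (d : nat) (z : zvec d) : set (rvec d) :=
  [set x | forall i, ((z i)%:~R <= x i) && (x i < (z i)%:~R + 4)].

Definition zadd (d : nat) (y z : zvec d) : zvec d := fun i => y i + z i.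

Definition emb (d : nat) (w : {ffun 'I_d -> 'I_4}) : zvec d :=
  fun i => ((w i : nat) : int).

(* A cube packing is given by the set Y of integer corners y of its cubes
   y + [0,2[^d. *)
Definition is_cube_packing (d : nat) (Y : zvec d -> bool) : Prop :=
  (forall (y k : zvec d), Y y -> Y (fun i => y i + 4 * k i)) /\
  (forall (y y' : zvec d), Y y -> Y y' -> y <> y' ->
     cube y `&` cube y' = set0).

(* Number of cubes = number of 4Z^d-orbits of cubes; each orbit has exactly
   one corner in {0,1,2,3}^d. *)
Definition ncubes (d : nat) (Y : zvec d -> bool) : nat :=
  #|[set w : {ffun 'I_d -> 'I_4} | Y (emb w)]|.

(* N_z(CP): number of cubes of CP contained in z + [0,4[^d.  The corner of
   such a cube lies in the box, hence is of the form z + w, w in {0,..,3}^d. *)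
Definition Nz (d : nat) (Y : zvec d -> bool) (z : zvec d) : nat :=
  #|[set w : {ffun 'I_d -> 'I_4} |
      Y (zadd z (emb w)) && `[< cube (zadd z (emb w)) `<=` box4 z >]]|.

(* Average of a 4Z^d-periodic function on Z^d. *)
Definition avg (d : nat) (g : zvec d -> Rdefinitions.R) : Rdefinitions.R :=
  (4%:R ^+ d)^-1 * \sum_(w : {ffun 'I_d -> 'I_4}) g (emb w).

Definition moment (d : nat) (Y : zvec d -> bool) (k : nat) : Rdefinitions.R :=
  avg (fun z => (Nz Y z)%:R ^+ k).

(* Main.v *)
Require Import Defs.
From HB Require Import structures.
From mathcomp Require Import all_boot all_order all_algebra.
From mathcomp Require Import boolp classical_sets reals Rstruct.
From Stdlib Require Rdefinitions.
From mathcomp Require Import ring lra zify.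
Import Order.TTheory GRing.Theory Num.Theory.
Set Implicit Arguments.
Unset Strict Implicit.
Lemma cbound_seq (I : eqType) (r : seq I) (P : I -> bool) :
  2 ^ size r * (2 + \sum_(i <- r) P i) <= 2 * \prod_(i <- r) (if P i then 3 else 2).
Proof.
elim: r => [|x r IH]; first by rewrite !big_nil.
rewrite !big_cons /= expnS.
set E := \sum_(i <- r) P i in IH *.
set F := \prod_(i <- r) _ in IH *.
set D := 2 ^ size r in IH *.
case: (P x) => /=.
  nia.
nia.
Qed.

Lemma cbound (d : nat) (P : 'I_d -> bool) :
  2 ^ d * (2 + \sum_i P i) <= 2 * \prod_i (if P i then 3 else 2).
Proof.
have := cbound_seq (enum 'I_d) P.
by rewrite size_enum_ord -!big_enum.
Qed.

Lemma hsq (n q : nat) : (2 * q + 1) * n <= n * n + q * (q + 1).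
Proof.
case: (leqP n q) => hn.
  have [k ->] : exists k, q = n + k by exists (q - n); lia.
  nia.
have [k ->] : exists k, n = q + 1 + k by exists (n - q - 1); lia.
nia.
Qed.

Lemma sq_bound (n0 n1 n2 n3 q r : nat) : n0 + n1 + n2 + n3 = 4 * q + r ->
  4 * q * (q - 1) + 2 * r * q + (4 * q + r) <= n0 * n0 + n1 * n1 + n2 * n2 + n3 * n3.
Proof.
move=> H.
have h0 := hsq n0 q; have h1 := hsq n1 q; have h2 := hsq n2 q; have h3 := hsq n3 q.
have E : (2 * q + 1) * n0 + (2 * q + 1) * n1 + (2 * q + 1) * n2 + (2 * q + 1) * n3
   = (2 * q + 1) * (4 * q + r) by rewrite -H !mulnDr.
have F : 4 * q * (q - 1) + 2 * r * q + (4 * q + r) + 4 * (q * (q + 1)) = (2 * q + 1) * (4 * q + r).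
  case: q {H E h0 h1 h2 h3} => [|q]; first lia.
  rewrite subn1 /=. nia.
move: h0 h1 h2 h3 E F.
set a := (2 * q + 1) * (4 * q + r).
set b := q * (q + 1).
set c := 4 * q * (q - 1) + 2 * r * q + (4 * q + r).
lia.
Qed.

Lemma coord_bound d (A : {ffun 'I_d -> 'I_4} -> bool) (i : 'I_d) q r :
  \sum_(a | A a) 1 = 4 * q + r ->
  4 * q * (q - 1) + 2 * r * q <= \sum_(a | A a) \sum_(b | A b && (b != a)) (a i == b i).
Proof.
move=> HN.
pose n (v : 'I_4) := \sum_(b | A b && (b i == v)) 1.
have HN' : \sum_(a | A a) 1 = \sum_(v : 'I_4) n v.
  by rewrite (partition_big (fun a : {ffun 'I_d -> 'I_4} => a i) xpredT) //.
have HS : \sum_(a | A a) \sum_(b | A b) (a i == b i) = \sum_(v : 'I_4) n v * n v.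
  have -> : \sum_(a | A a) \sum_(b | A b) (a i == b i) = \sum_(a | A a) n (a i).
    apply: eq_bigr => a _; rewrite /n big_mkcondr /=.
    by apply: eq_bigr => b _; rewrite eq_sym; case: (b i == a i).
  rewrite (partition_big (fun a : {ffun 'I_d -> 'I_4} => a i) xpredT) //=.
  apply: eq_bigr => v _.
  rewrite (eq_bigr (fun _ => n v * 1)); last by move=> a /andP [_ /eqP ->]; rewrite muln1.
  by rewrite -big_distrr.
have HD : \sum_(a | A a) \sum_(b | A b) (a i == b i) =
    \sum_(a | A a) 1 + \sum_(a | A a) \sum_(b | A b && (b != a)) (a i == b i).
  rewrite -big_split /=; apply: eq_bigr => a Ha.
  by rewrite (bigD1 a) //= eqxx.
rewrite !big_ord_recl !big_ord0 !addn0 !addnA in HS.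
rewrite !big_ord_recl !big_ord0 !addn0 !addnA in HN'.
have := sq_bound (etrans (esym HN') HN).
move: HS HD; rewrite HN.
set X := \sum_(a | A a) _.
lia.
Qed.

Definition cc d (a b : {ffun 'I_d -> 'I_4}) := \prod_(i < d) (if a i == b i then 3 else 2).

Lemma main_ineq d (A : {ffun 'I_d -> 'I_4} -> bool) N q r :
  \sum_(a | A a) 1 = N -> N = 4 * q + r ->
  2 * (3 ^ d * N) + 2 ^ d * (2 * (N * (N - 1)) + d * (4 * q * (q - 1) + 2 * r * q))
  <= 2 * \sum_(a | A a) \sum_(b | A b) cc a b.
Proof.
move=> HN HNq.
pose E a := \sum_(b | A b && (b != a)) \sum_(i < d) (a i == b i).
have Ha : forall a, A a ->
   2 * 3 ^ d + 2 ^ d * (2 * (N - 1) + E a) <= 2 * \sum_(b | A b) cc a b.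
  move=> a Aa.
  have Hc : cc a a = 3 ^ d.
    rewrite /cc (eq_bigr (fun _ => 3)); last by move=> i _; rewrite eqxx.
    by rewrite prod_nat_const card_ord.
  have HN1 : \sum_(b | A b && (b != a)) 1 = N - 1.
    by rewrite -HN [in RHS](bigD1 a) //= addKn.
  have S1 : 2 ^ d * (2 * (N - 1) + E a) =
      \sum_(b | A b && (b != a)) 2 ^ d * (2 + \sum_(i < d) (a i == b i)).
    rewrite -HN1 /E big_distrr -big_split /= big_distrr /=.
    by apply: eq_bigr => b _; rewrite muln1.
  have S2 : \sum_(b | A b && (b != a)) 2 ^ d * (2 + \sum_(i < d) (a i == b i))
      <= 2 * \sum_(b | A b && (b != a)) cc a b.
    by rewrite big_distrr; apply: leq_sum => b _; exact: cbound.
  rewrite [X in _ <= 2 * X](bigD1 a) //= Hc S1 [in X in _ <= X]mulnDr leq_add2l; exact: S2.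
have H1 : \sum_(a | A a) (2 * 3 ^ d + 2 ^ d * (2 * (N - 1) + E a))
   <= 2 * \sum_(a | A a) \sum_(b | A b) cc a b.
  by rewrite big_distrr /=; apply: leq_sum.
have H2 : d * (4 * q * (q - 1) + 2 * r * q) <= \sum_(a | A a) E a.
  rewrite /E.
  rewrite (eq_bigr (fun a => \sum_(i < d) \sum_(b | A b && (b != a)) (a i == b i))); last first.
    by move=> a _; rewrite exchange_big.
  rewrite exchange_big /=.
  rewrite -[d in d * _]card_ord -sum_nat_const.
  apply: leq_sum => i _.
  exact: coord_bound (etrans HN HNq).
have Hc : forall c, \sum_(a | A a) c = c * N.
  by move=> c; rewrite -HN big_distrr /=; apply: eq_bigr => ? _; rewrite muln1.
rewrite big_split /= Hc -big_distrr /= big_split /= Hc in H1.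
have H2' := leq_mul2l (2 ^ d) (d * (4 * q * (q - 1) + 2 * r * q)) (\sum_(a | A a) E a).
rewrite H2 orbT in H2'.
move: H1 H2'.
set P := 2 ^ d; set T := 3 ^ d; set SE := \sum_(a | A a) E a; set K := 4 * q * (q - 1) + 2 * r * q.
set S := \sum_(a | A a) _.
nia.
Qed.

Local Open Scope ring_scope.
Definition g (x t : 'I_4) : nat := ((val (x - t)%R) <= 2)%N.

Lemma g_sum1 x : (\sum_(t : 'I_4) g x t = 3)%N.
Proof.
by case: x => [[|[|[|[|//]]]] Hx]; rewrite !big_ord_recl big_ord0.
Qed.

Lemma g_sum2 x y : (\sum_(t : 'I_4) g x t * g y t = if x == y then 3 else 2)%N.
Proof.
by case: x => [[|[|[|[|//]]]] Hx]; case: y => [[|[|[|[|//]]]] Hy]; rewrite !big_ord_recl big_ord0.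
Qed.


Lemma sub_box d (z : zvec d) (w : {ffun 'I_d -> 'I_4}) :
  `[< (cube (zadd z (emb w)) `<=` box4 z)%classic >] = [forall i, (w i <= 2)%N].
Proof.
apply/asboolP/forallP.
- move=> H i; apply/negPn/negP; rewrite -ltnNge => Hw.
  have Hw3 : (w i : nat) = 3%N by have := ltn_ord (w i); lia.
  pose x : rvec d := fun j => ((zadd z (emb w) j)%:~R + 1).
  have Hx : cube (zadd z (emb w)) x.
    by move=> j; rewrite /x; apply/andP; split; lra.
  have := H x Hx i; rewrite /x /zadd /emb Hw3 rmorphD /=.
  move/andP => [_]; lra.
- move=> H x Hx i; have /andP [h1 h2] := Hx i; have Hw := H i.
  have Hw' : ((w i : nat)%:R <= 2 :> Rdefinitions.R).
    by rewrite ler_nat.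
  move: h1 h2; rewrite /zadd /emb rmorphD /= -[((w i : nat) : int)%:~R]/((w i : nat)%:R).
  move=> h1 h2; apply/andP; split.
    have : (0 <= (w i : nat)%:R :> Rdefinitions.R) by [].
    lra.
  lra.
Qed.

Lemma prod_bool (I : finType) (b : I -> bool) :
  (\prod_i (b i : nat) = [forall i, b i])%N.
Proof.
case: (boolP [forall i, b i]) => [/forallP H | /forallPn [i Hi]].
  by rewrite big1 // => i _; rewrite H.
by rewrite (bigD1 i) //= (negbTE Hi).
Qed.

Lemma Yper d (Y : zvec d -> bool) (HY : is_cube_packing Y) (y k : zvec d) :
  Y (fun i => y i + 4 * k i) = Y y.
Proof.
case: HY => HY _; apply/idP/idP; last exact: HY.
move=> H; have := HY _ (fun i => - k i) H.
have -> : (fun i => y i + 4 * k i + 4 * - k i) = y.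
  by apply: funext => i; lia.
by [].
Qed.

Lemma Yemb d (Y : zvec d -> bool) (HY : is_cube_packing Y) (z w : {ffun 'I_d -> 'I_4}) :
  Y (zadd (emb z) (emb w)) = Y (emb (z + w)).
Proof.
rewrite -[RHS](Yper HY _ (fun i => (((z i + w i) %/ 4)%N : int))).
congr Y; apply: funext => i; rewrite /zadd /emb ffunE /=.
have := divn_eq (z i + w i) 4; lia.
Qed.

Lemma Nz_sum d (Y : zvec d -> bool) (HY : is_cube_packing Y) (z : {ffun 'I_d -> 'I_4}) :
  Nz Y (emb z) = (\sum_(a | Y (emb a)) \prod_i g (a i) (z i))%N.
Proof.
rewrite /Nz -sum1_card big_mkcond /= [RHS]big_mkcond /=.
rewrite (reindex_inj (addIr (- z))) /=.
apply: eq_bigr => a _; rewrite /in_mem /= /in_set /mkset asboolb Yemb // addrC subrK. rewrite sub_box.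
rewrite (eq_bigr (fun i => (((a - z)%R i : nat) <= 2)%N : nat)); last first.
  by move=> i _; rewrite /g !ffunE.
rewrite prod_bool.
by case: (Y (emb a)).
Qed.


Lemma sum_s1 d (a : {ffun 'I_d -> 'I_4}) :
  (\sum_(z : {ffun 'I_d -> 'I_4}) \prod_i g (a i) (z i) = 3 ^ d)%N.
Proof.
rewrite -(bigA_distr_bigA (fun i t => g (a i) t)) /=.
rewrite (eq_bigr (fun _ => 3%N)); last by move=> i _; rewrite g_sum1.
by rewrite prod_nat_const card_ord.
Qed.

Lemma sum_s2 d (a b : {ffun 'I_d -> 'I_4}) :
  (\sum_(z : {ffun 'I_d -> 'I_4}) (\prod_i g (a i) (z i)) * (\prod_i g (b i) (z i)) = cc a b)%N.
Proof.
rewrite (eq_bigr (fun z : {ffun 'I_d -> 'I_4} => \prod_i (g (a i) (z i) * g (b i) (z i))%N)); last first.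
  by move=> z _; rewrite big_split.
rewrite -(bigA_distr_bigA (fun i t => g (a i) t * g (b i) t)%N) /=.
by apply: eq_bigr => i _; rewrite g_sum2.
Qed.

Lemma ncubesE d (Y : zvec d -> bool) : ncubes Y = (\sum_(a | Y (emb a)) 1)%N.
Proof.
rewrite /ncubes -sum1_card; apply: eq_bigl => a.
by rewrite /in_mem /= /in_set /mkset asboolb.
Qed.

Lemma S1n d (Y : zvec d -> bool) (HY : is_cube_packing Y) :
  (\sum_(w : {ffun 'I_d -> 'I_4}) Nz Y (emb w) = 3 ^ d * ncubes Y)%N.
Proof.
rewrite (eq_bigr _ (fun z _ => Nz_sum HY z)) exchange_big /=.
rewrite ncubesE big_distrr /=; apply: eq_bigr => a _.
by rewrite sum_s1 muln1.
Qed.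

Lemma S2n d (Y : zvec d -> bool) (HY : is_cube_packing Y) :
  (\sum_(w : {ffun 'I_d -> 'I_4}) Nz Y (emb w) ^ 2 =
   \sum_(a | Y (emb a)) \sum_(b | Y (emb b)) cc a b)%N.
Proof.
rewrite (eq_bigr _ (fun z _ => congr1 (fun x => x ^ 2)%N (Nz_sum HY z))) /=.
rewrite (eq_bigr (fun z : {ffun 'I_d -> 'I_4} => \sum_(a | Y (emb a)) \sum_(b | Y (emb b))
   (\prod_i g (a i) (z i)) * (\prod_i g (b i) (z i)))%N); last first.
  move=> z _; rewrite expnS expn1 big_distrl /=; apply: eq_bigr => a _.
  by rewrite big_distrr.
rewrite exchange_big /=; apply: eq_bigr => a _.
rewrite exchange_big /=; apply: eq_bigr => b _.
exact: sum_s2.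
Qed.

Lemma natr_pred (n : nat) : (n%:R * (n%:R - 1) : Rdefinitions.R) = (n * (n - 1))%N%:R.
Proof.
case: n => [|n]; first by rewrite mul0r.
by rewrite subn1 /= natrM -addn1 natrD addrK.
Qed.

Lemma natr_pred' (n : nat) : (n%:R * (n - 1)%N%:R : Rdefinitions.R) = n%:R * (n%:R - 1).
Proof.
case: n => [|n]; first by rewrite !mul0r.
by rewrite subn1 /= -addn1 natrD addrK.
Qed.

Theorem theorem3 (d : nat) (Y : zvec d -> bool) (q r : nat) :
  is_cube_packing Y ->
  ncubes Y = (4 * q + r)%N -> (r <= 3)%N ->
  moment Y 1 = (3%:R ^+ d / 4%:R ^+ d) * (ncubes Y)%:R /\
  moment Y 1 + (ncubes Y)%:R * ((ncubes Y)%:R - 1) * (2%:R ^+ d)^-1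
    + (2%:R ^+ d)^-1 * d%:R * (2%:R * q%:R * (q%:R - 1) + r%:R * q%:R)
    <= moment Y 2.
Proof.
move=> HY HN Hr.
have M1 : moment Y 1 = (4%:R ^+ d)^-1 * (3 ^ d * ncubes Y)%N%:R.
  rewrite /moment /avg -S1n // natr_sum; by congr (_ * _).
have M2 : moment Y 2 = (4%:R ^+ d)^-1 *
     (\sum_(a | Y (emb a)) \sum_(b | Y (emb b)) cc a b)%N%:R.
  rewrite /moment /avg -S2n // natr_sum; congr (_ * _).
  by apply: eq_bigr => w _; rewrite natrX.
set N := ncubes Y in HN M1 *.
set S := (\sum_(a | Y (emb a)) _)%N in M2.
have HI := main_ineq (esym (ncubesE Y)) HN.
rewrite -/S -/N in HI.
have u0 : (2%:R ^+ d : Rdefinitions.R) != 0 by rewrite expf_neq0 // pnatr_eq0.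
have Hu : (4%:R ^+ d : Rdefinitions.R) = 2%:R ^+ d * 2%:R ^+ d by rewrite -exprMn -natrM.
split.
  by rewrite M1 natrM natrX; ring.
pose Xn := (3 ^ d * N + 2 ^ d * (N * (N - 1)) + 2 ^ d * d * (2 * (q * (q - 1)) + r * q))%N.
have HX : (Xn <= S)%N.
  rewrite -(leq_pmul2l (isT : (0 < 2)%N)); apply: leq_trans HI.
  rewrite /Xn; set t := (q - 1)%N; set M := (N - 1)%N.
  apply: eq_leq; ring.
have E : moment Y 1 + N%:R * (N%:R - 1) * (2%:R ^+ d)^-1
    + (2%:R ^+ d)^-1 * d%:R * (2%:R * q%:R * (q%:R - 1) + r%:R * q%:R)
    = (4%:R ^+ d)^-1 * Xn%:R.
  rewrite M1 Hu /Xn.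
  rewrite !(natrD, natrM, natrX, natr_pred').
  field.
  by rewrite u0.
rewrite E M2 ler_wpM2l //; last by rewrite ler_nat.
by rewrite invr_ge0 exprn_ge0.
Qed.
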